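(* Let $G$ be a nontrivial finite cyclic group. Then the order-sum graph $\Gamma_{OS}(G)$ is minimally edge connected if and only if $|G|$ is a prime.
   Context: The order-sum graph $\Gamma_{OS}(G)$ of a finite group $G$ is the simple undirected graph with vertex set $G$ in which two distinct elements $x,y$ are adjacent if and only if $o(x)+o(y)>|G|$, where $o(x)$ is the order of $x$. For a connected graph $\Gamma$, an edge cut-set is a set $S$ of edges such that $\Gamma-S$ is disconnected or has just one vertex, and the edge connectivity $\kappa'(\Gamma)$ is the smallest size of an edge cut-set. $\Gamma$ is minimally edge connected if $\kappa'(\Gamma-\epsilon)=\kappa'(\Gamma)-1$ for every edge $\epsilon$ of $\Gamma$. *)

(* Defs.v *)
From mathcomp Require Import all_boot fingroup cyclic.
Set Implicit Arguments. Unset Strict Implicit. Unset Printing Implicit Defensive.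

(* Simple graphs with vertex set V : {set T} and edge set E : {set {set T}},
   each edge being a 2-element set [set x; y]. *)
Section Graphs.
Variable T : finType.

Definition adj (E : {set {set T}}) : rel T :=
  fun x y => (x != y) && ([set x; y] \in E).

Definition disc_or_triv (V : {set T}) (E : {set {set T}}) : bool :=
  (#|V| <= 1) || ~~ [forall x in V, forall y in V, connect (adj E) x y].

(* edge connectivity: smallest size of an edge cut-set (S = E is always a
   cut-set, so #|E| is a harmless neutral element) *)
Definition edge_conn (V : {set T}) (E : {set {set T}}) : nat :=
  \big[minn/#|E|]_(S in powerset E | disc_or_triv V (E :\: S)) #|S|.

Definition min_edge_connected (V : {set T}) (E : {set {set T}}) : Prop :=
  forall e, e \in E -> edge_conn V E = (edge_conn V (E :\ e)).+1.
End Graphs.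

Definition os_edges (gT : finGroupType) (G : {set gT}) : {set {set gT}} :=
  [set e : {set gT} | [exists x in G, exists y in G,
      [&& x != y, e == [set x; y] & #|G| < #[x]%g + #[y]%g]]].

(* Main.v *)
Require Import Defs.
From mathcomp Require Import all_boot fingroup cyclic.
From mathcomp Require Import zify.
Set Implicit Arguments. Unset Strict Implicit. Unset Printing Implicit Defensive.

Section Gen.
Variable T : finType.
Implicit Types (V K : {set T}) (F S : {set {set T}}).

Lemma adj_sym F : symmetric (adj F).
Proof. by move=> x y; rewrite /adj eq_sym setUC. Qed.

Lemma isolated_conn F v w : (forall z, ~~ adj F v z) -> connect (adj F) v w -> w = v.
Proof.
move=> H /connectP [[|z p] /=]; first by move=> _ ->.
by rewrite (negbTE (H z)).
Qed.

Lemma isolated_cut V F v w : v \in V -> w \in V -> w != v ->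
  (forall z, ~~ adj F v z) -> disc_or_triv V F.
Proof.
move=> vV wV wv H; rewrite /disc_or_triv; apply/orP; right.
apply/forallPn; exists v; rewrite vV /=; apply/forallPn; exists w; rewrite wV /=.
by apply/negP => /(isolated_conn H) /eqP; rewrite (negbTE wv).
Qed.

Lemma cross F S x p q : connect (adj (F :\: S)) x p ->
  ~~ connect (adj (F :\: S)) x q -> [set p; q] \in F -> [set p; q] \in S.
Proof.
move=> cp cq pqF.
have pq : p != q by apply: contraNneq cq => <-.
apply/negPn/negP => pqS; case/negP: cq; apply: connect_trans cp (connect1 _).
by rewrite /adj pq inE pqS pqF.
Qed.

Lemma bigmin_le (I : finType) (P : pred I) (G : I -> nat) x0 j :
  P j -> \big[minn/x0]_(i | P i) G i <= G j.
Proof.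
move=> Pj; have : j \in index_enum I by rewrite mem_index_enum.
elim: (index_enum I) => // a r IH; rewrite big_cons inE => /orP[/eqP <-|jr].
  by rewrite Pj geq_minl.
by case: ifP => _; [rewrite geq_min IH ?orbT | apply: IH].
Qed.

Lemma ec_ub V F S : S \subset F -> disc_or_triv V (F :\: S) -> edge_conn V F <= #|S|.
Proof.
move=> sSF dS; rewrite /edge_conn; apply: (bigmin_le (P := fun S => (S \in powerset F) && disc_or_triv V (F :\: S))).
by rewrite powersetE sSF dS.
Qed.

Lemma ec_lb V F m : 1 < #|V| ->
  (forall S, S \subset F -> disc_or_triv V (F :\: S) -> m <= #|S|) ->
  m <= edge_conn V F.
Proof.
move=> V2 H; rewrite /edge_conn; apply: (big_ind (fun k => m <= k)).
- apply: H => //; rewrite setDv.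
  case/card_gt1P: V2 => x [y [xV yV xy]].
  by apply: (isolated_cut xV yV); [rewrite eq_sym | move=> z; rewrite /adj inE andbF].
- by move=> a b; rewrite leq_min => -> ->.
- by move=> S /andP[]; rewrite powersetE; exact: H.
Qed.

Definition vstar F (v : T) := F :&: [set e : {set T} | v \in e].

Lemma vstar_cut V F v w : v \in V -> w \in V -> w != v ->
  edge_conn V F <= #|vstar F v|.
Proof.
move=> vV wV wv; apply: ec_ub; first exact: subsetIl.
apply: (isolated_cut vV wV wv) => z; rewrite /adj !inE eqxx /=.
by case: ([set v; z] \in F); rewrite ?andbF ?andbT.
Qed.

Lemma disc_cut V F : 1 < #|V| -> disc_or_triv V F ->
  exists x y, [/\ x \in V, y \in V & ~~ connect (adj F) x y].
Proof.
rewrite /disc_or_triv => V2; rewrite leqNgt V2 /= => /forallPn[x].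
rewrite negb_imply => /andP[xV /forallPn[y]]; rewrite negb_imply => /andP[yV nc].
by exists x, y.
Qed.

Lemma pick_root F r x y : ~~ connect (adj F) x y ->
  ~~ connect (adj F) r x || ~~ connect (adj F) r y.
Proof.
apply: contraR; rewrite negb_or !negbK => /andP[rx ry].
rewrite (sym_connect_sym (adj_sym F)) in rx.
exact: connect_trans rx ry.
Qed.

Definition fmap (c : pred T) (x y g : T) := if c g then [set g; y] else [set x; g].

Lemma inj_map (c : pred T) x y K : c x -> ~~ c y -> x \notin K ->
  {in K &, injective (fmap c x y)}.
Proof.
move=> cx ncy xK g1 g2 g1K g2K; rewrite /fmap.
have ney g : c g -> g != y by move=> cg; apply: contraNneq ncy => <-.
have nex g : g \in K -> x != g by move=> gK; apply: contraNneq xK => ->.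
case: (boolP (c g1)) => c1; case: (boolP (c g2)) => c2 E.
- have := set21 g1 y; rewrite E !inE => /orP[/eqP //|/eqP e1].
  by move: (ney _ c1); rewrite e1 eqxx.
- have := set21 x g2; rewrite -E !inE => /orP[/eqP e1|/eqP e1].
    by move: (nex _ g1K); rewrite e1 eqxx.
  by move: ncy; rewrite -e1 cx.
- have := set21 x g1; rewrite E !inE => /orP[/eqP e1|/eqP e1].
    by move: (nex _ g2K); rewrite e1 eqxx.
  by move: ncy; rewrite -e1 cx.
- have := set22 x g1; rewrite E !inE => /orP[/eqP e1|/eqP //].
  by move: (nex _ g1K); rewrite e1 eqxx.
Qed.

Lemma fmap_in F S x y g : ~~ connect (adj (F :\: S)) x y ->
  fmap (connect (adj (F :\: S)) x) x y g \in F ->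
  fmap (connect (adj (F :\: S)) x) x y g \in S.
Proof.
rewrite /fmap => nxy; case: ifP => cg gF.
  exact: cross cg nxy gF.
by apply: cross (connect0 _ _) _ gF; rewrite cg.
Qed.

Lemma gen_bound F S x y K : ~~ connect (adj (F :\: S)) x y -> x \notin K ->
  (forall g, g \in K -> fmap (connect (adj (F :\: S)) x) x y g \in F) ->
  #|K| <= #|S|.
Proof.
move=> nxy xK H.
rewrite -(card_in_imset (inj_map (connect0 _ x) nxy xK)).
apply: subset_leq_card; apply/subsetP => _ /imsetP[g gK ->].
exact: fmap_in (H g gK).
Qed.

Lemma gen_bound_e F S e x y K : ~~ connect (adj (F :\: S)) x y -> x \notin K ->
  (forall g, g \in K -> fmap (connect (adj (F :\: S)) x) x y g \in e |: F) ->
  #|K| <= #|S|.+1.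
Proof.
move=> nxy xK H.
rewrite -(card_in_imset (inj_map (connect0 _ x) nxy xK)).
apply: (@leq_trans #|e |: S|); last by rewrite cardsU1; case: (e \in S).
apply: subset_leq_card; apply/subsetP => _ /imsetP[g gK ->].
move: (H g gK); rewrite !inE => /orP[-> //|gF].
by rewrite (fmap_in nxy gF) orbT.
Qed.

Lemma card2D (A : {set T}) (a b : T) : a \in A -> b \in A -> a != b -> #|A :\ a :\ b| + 2 = #|A|.
Proof.
move=> aA bA ab; rewrite [in RHS](cardsD1 a) aA [#|A :\ a|](cardsD1 b).
by rewrite !inE eq_sym ab bA /=; lia.
Qed.

End Gen.

Section Grp.
Variables (gT : finGroupType) (G : {group gT}).
Local Notation E := (os_edges G).
Local Notation n := #|G|.

Lemma edgeI x y : x \in G -> y \in G -> x != y -> n < #[x]%g + #[y]%g ->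
  [set x; y] \in E.
Proof.
move=> xG yG xy lt; rewrite inE; apply/existsP; exists x; rewrite xG /=.
by apply/existsP; exists y; rewrite yG xy eqxx lt.
Qed.

Lemma edge_sub e : e \in E -> exists x y,
  [/\ x \in G, y \in G, x != y, e = [set x; y] & n < #[x]%g + #[y]%g].
Proof.
rewrite inE => /existsP[x /andP[xG /existsP[y /andP[yG /and3P[xy /eqP-> lt]]]]].
by exists x, y.
Qed.

Lemma edge_at e v : e \in E -> v \in e -> exists z,
  [/\ z \in G, z != v & e = [set v; z]].
Proof.
case/edge_sub=> x [y [xG yG xy -> _]]; rewrite !inE => /orP[]/eqP->.
  by exists y; rewrite eq_sym.
by exists x; rewrite setUC.
Qed.

Lemma ord_le g : g \in G -> #[g]%g <= n.
Proof. by move=> gG; apply: dvdn_leq (cardG_gt0 G) (order_dvdG gG). Qed.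

Lemma edge_1 y : [set 1%g; y] \in E -> #[y]%g = n /\ y \in G.
Proof.
case/edge_sub=> x' [y' [x'G y'G xy E lt]].
have := set21 x' y'; rewrite -E !inE => /orP[]/eqP ex;
have := set22 x' y'; rewrite -E !inE => /orP[]/eqP ey; subst.
- by rewrite eqxx in xy.
- by rewrite order1 in lt; have := ord_le y'G; split=> //; lia.
- by rewrite order1 in lt; have := ord_le x'G; split=> //; lia.
- by rewrite eqxx in xy.
Qed.

Lemma edge_gen g y : g \in G -> y \in G -> g != y -> #[g]%g = n -> [set g; y] \in E.
Proof.
move=> gG yG gy og; apply: edgeI => //; rewrite og; have := order_gt0 y; lia.
Qed.

Lemma prime_ord g : prime n -> g \in G -> g != 1%g -> #[g]%g = n.
Proof.
move=> pr gG g1; case/primeP: pr => _ /(_ _ (order_dvdG gG)) /orP[|/eqP //].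
by rewrite order_eq1 (negbTE g1).
Qed.

Lemma prime_edge x y : prime n -> x \in G -> y \in G -> x != y -> [set x; y] \in E.
Proof.
move=> pr xG yG xy; case: (eqVneq x 1%g) => [x1|x1].
  rewrite setUC; apply: edge_gen => //; first by rewrite eq_sym.
  by apply: prime_ord => //; rewrite -x1 eq_sym.
exact: edge_gen (prime_ord pr xG x1).
Qed.

Lemma prime_lb_E : prime n -> n.-1 <= edge_conn G E.
Proof.
move=> pr; have n1 : 1 < n by apply: prime_gt1.
apply: ec_lb => // S sSF /(disc_cut n1) [x [y [xG yG nxy]]].
have xK : x \notin G :\ x by rewrite !inE eqxx.
have H := @gen_bound _ E S x y (G :\ x) nxy xK.
have -> : n.-1 = #|G :\ x| by rewrite [in LHS](cardsD1 x) xG.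
apply: H => g; rewrite in_setD1 => /andP[gx gG].
rewrite /fmap; case: ifP => cg.
  apply: prime_edge => //; apply: contraNneq nxy => <-; exact: cg.
by apply: prime_edge => //; rewrite eq_sym.
Qed.

Lemma prime_lb_Ee e : prime n -> e \in E -> n.-2 <= edge_conn G (E :\ e).
Proof.
move=> pr eE; have n1 : 1 < n by apply: prime_gt1.
apply: ec_lb => // S sSF /(disc_cut n1) [x [y [xG yG nxy]]].
have xK : x \notin G :\ x by rewrite !inE eqxx.
have H := @gen_bound_e _ (E :\ e) S e x y (G :\ x) nxy xK.
have e1 : n.-1 = #|G :\ x| by rewrite [in LHS](cardsD1 x) xG.
suff: #|G :\ x| <= #|S|.+1 by rewrite -e1; lia.
apply: H => g; rewrite in_setD1 => /andP[gx gG].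
have fE : fmap (connect (adj (E :\ e :\: S)) x) x y g \in E.
  rewrite /fmap; case: ifP => cg.
    apply: prime_edge => //; apply: contraNneq nxy => <-; exact: cg.
  by apply: prime_edge => //; rewrite eq_sym.
by rewrite in_setU1 in_setD1 fE andbT; case: eqP.
Qed.

Lemma prime_ub_E : prime n -> edge_conn G E <= n.-1.
Proof.
move=> pr; have n1 : 1 < n by apply: prime_gt1.
case/card_gt1P: n1 => v [w [vG wG vw]].
apply: leq_trans (vstar_cut E vG wG _) _; first by rewrite eq_sym.
have -> : n.-1 = #|G :\ v| by rewrite (cardsD1 v) vG.
apply: leq_trans (leq_imset_card (fun z => [set v; z]) _).
apply: subset_leq_card; apply/subsetP => f; rewrite /vstar in_setI => /andP[fE]; rewrite inE => vf.
case: (edge_at fE vf) => z [zG zv ->]; apply/imsetP; exists z => //.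
by rewrite !inE zv.
Qed.

Lemma prime_ub_Ee e : prime n -> e \in E -> edge_conn G (E :\ e) <= n.-2.
Proof.
move=> pr eE; case: (edge_sub eE) => a [b [aG bG ab ee _]].
apply: leq_trans (vstar_cut (E :\ e) aG bG _) _; first by rewrite eq_sym.
have <- : #|G :\ a :\ b| = n.-2 by have := card2D aG bG ab; lia.
apply: leq_trans (leq_imset_card (fun z => [set a; z]) _).
apply: subset_leq_card; apply/subsetP => f; rewrite /vstar in_setI in_setD1 => /andP[/andP[fe fE]]; rewrite inE => af.
case: (edge_at fE af) => z [zG za ef]; apply/imsetP; exists z => //.
apply/setD1P; split; last by apply/setD1P.
apply/negP => /eqP zb; move: fe.
by rewrite ef ee zb eqxx.
Qed.

End Grp.

Section Comp.
Variables (gT : finGroupType) (G : {group gT}).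
Local Notation E := (os_edges G).
Local Notation n := #|G|.

Lemma composite_not_mec : cyclic G -> 1 < n -> ~~ prime n ->
  ~ min_edge_connected G E.
Proof.
move=> cG n1 np mec.
case/cyclicP: cG => x0 Gx.
have ox0 : #[x0]%g = n by rewrite Gx.
have x0G : x0 \in G by rewrite Gx cycle_id.
pose K := [set g in G | #[g]%g == n].
have inK g : (g \in K) = (g \in G) && (#[g]%g == n) by rewrite inE.
pose a := x0; pose b := (x0^-1)%g.
have aK : a \in K by rewrite inK x0G ox0 eqxx.
have bK : b \in K by rewrite inK groupV x0G orderV ox0 eqxx.
have aG : a \in G by [].
have bG : b \in G by rewrite groupV.
have ab : a != b.
  apply/negP => /eqP; rewrite /a /b => eab.
  have : (x0 ^+ 2 == 1)%g by rewrite expgS expg1 {1}eab mulVg.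
  rewrite -order_dvdn ox0 => /(dvdn_leq (isT : 0 < 2)) n2.
  by move: np; have -> : n = 2 by lia.
have oneK : (1%g : gT) \notin K by rewrite inK order1; apply/nandP; right; rewrite eq_sym; lia.
pose p := pdiv n.
have pp : prime p by apply: pdiv_prime.
have pn : p %| n by apply: pdiv_dvd.
pose u2 := (x0 ^+ p)%g.
have u2G : u2 \in G by rewrite groupX.
case/dvdnP: (pn) => q nq.
have ou2 : #[u2]%g = q by rewrite /u2 orderXdiv ox0 // nq mulnK // prime_gt0.
have p1 := prime_gt1 pp.
have qn : q != n.
  apply/eqP => qE; move: nq; rewrite qE => nq; have := cardG_gt0 G; nia.
have q1 : q != 1.
  by apply/eqP => qE; move: np; rewrite nq qE mul1n pp.
have u2K : u2 \notin K by rewrite inK ou2 (negbTE qn) andbF.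
have u21 : u2 != 1%g by rewrite -order_eq1 ou2.
have cardK : #|K| + 2 <= n.
  have u12 : (1%g : gT) != u2 by rewrite eq_sym.
  rewrite -(card2D (group1 G) u2G u12).
  rewrite leq_add2r; apply: subset_leq_card; apply/subsetP => g gK.
  rewrite !inE; apply/and3P; split.
  - by apply: contraNneq u2K => <-.
  - by apply: contraNneq oneK => <-.
  - by move: gK; rewrite inK => /andP[].
pose e := [set a; b].
have eE : e \in E by apply: edge_gen => //; move: aK; rewrite inK => /andP[_ /eqP].
have ub : edge_conn G E <= #|K|.
  apply: leq_trans (vstar_cut E (group1 G) aG _) _.
    by apply: contraNneq oneK => <-.
  apply: leq_trans (leq_imset_card (fun z => [set 1%g; z]) K).
  apply: subset_leq_card; apply/subsetP => f.
  rewrite /vstar in_setI => /andP[fE]; rewrite inE => vf.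
  case: (edge_at fE vf) => z [zG z1 ef]; apply/imsetP; exists z => //.
  rewrite ef in fE; case: (edge_1 fE) => oz _.
  by rewrite inK zG oz eqxx.
have lb : #|K| <= edge_conn G (E :\ e).
  apply: ec_lb => // S sSF /(disc_cut n1) [x [y [xG yG nxy]]].
  set F' := E :\ e :\: S.
  pose c := connect (adj F') 1%g.
  have [y' [y'G ny']] : exists y', y' \in G /\ ~~ c y'.
    by case/orP: (pick_root 1%g nxy) => ?; [exists x | exists y].
  have genA z : z \in G -> ~~ c z -> (forall g, g \in K -> c g -> [set g; z] != e) ->
      #|K| <= #|S|.
    move=> zG nz He; apply: (gen_bound nz oneK) => g gK.
    have gG : g \in G by move: gK; rewrite inK => /andP[].
    have og : #[g]%g = n by move: gK; rewrite inK => /andP[_ /eqP].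
    rewrite /fmap in_setD1; case: ifP => cg.
      rewrite He //=; apply: edge_gen => //.
      by apply: contraNneq nz => <-.
    apply/andP; split.
      apply/negP => /eqP ef; have := set21 1%g g; rewrite ef !inE.
      by case/orP => /eqP e1; [move: aK | move: bK]; rewrite -e1 (negbTE oneK).
    rewrite setUC; apply: edge_gen => //; first by apply: contraNneq oneK => <-.
  have B2 d d' : [set d; d'] = e -> d \in K -> d != d' -> ~~ c d ->
      (forall z, z \in G -> ~~ c z -> z = d) -> #|K| <= #|S|.
    move=> ed dK dd' ncd Hz.
    have dG : d \in G by move: dK; rewrite inK => /andP[].
    have od : #[d]%g = n by move: dK; rewrite inK => /andP[_ /eqP].
    have d'G : d' \in G.
      have : d' \in e by rewrite -ed set22.
      by rewrite !inE => /orP[]/eqP->.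
    have nd1 : ~~ connect (adj F') d 1%g.
      by rewrite (sym_connect_sym (adj_sym F')).
    have dK' : d \notin G :\ d :\ d' by rewrite !inE eqxx andbF.
    apply: (@leq_trans #|G :\ d :\ d'|).
      by move: cardK; rewrite -(card2D dG d'G dd') leq_add2r.
    apply: (gen_bound nd1 dK') => g; rewrite !in_setD1 => /and3P[gd' gd gG].
    have ncg : connect (adj F') d g = false.
      apply/negP => cdg; have cg : c g.
        apply/negPn/negP => ncg; move: gd; by rewrite (Hz g gG ncg) eqxx.
      case/negP: ncd; apply: connect_trans cg _.
      by rewrite (sym_connect_sym (adj_sym F')).
    rewrite /fmap -/F' ncg; apply/andP; split.
      apply/negP => /eqP ef; have := set22 d g; rewrite ef -ed !inE.
      by rewrite (negbTE gd) (negbTE gd').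
    by apply: edge_gen => //; rewrite eq_sym.
  case: (boolP (~~ c a && ~~ c b)) => [/andP[nca ncb] | nab].
    apply: (genA a aG nca) => g gK cg; apply/negP => /eqP ef.
    have : b \in e by rewrite /e set22.
    rewrite -ef !inE.
    case/orP => /eqP eb; first by move: ncb; rewrite eb cg.
    by move: ab; rewrite eb eqxx.
  case: (boolP [exists z in G, ~~ c z && (z != a) && (z != b)]).
    case/existsP => z /andP[zG /andP[/andP[nz za] zb]].
    apply: (genA z zG nz) => g gK cg; apply/negP => /eqP ef.
    have := set22 g z; rewrite ef !inE (negbTE za) (negbTE zb) //.
  move=> /existsPn Hn.
  have Hab z : z \in G -> ~~ c z -> (z == a) || (z == b).
    move=> zG nz; move: (Hn z); rewrite zG nz /= negb_and !negbK.
    by rewrite orbC.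
  case/orP: (Hab y' y'G ny') => /eqP ey.
  - subst y'; apply: (B2 a b) => // z zG nz.
    case/orP: (Hab z zG nz) => /eqP ez; subst z => //.
    by move: nab; rewrite ny' nz.
  - subst y'; apply: (B2 b a) => //; first by rewrite /e setUC.
      by rewrite eq_sym.
    move=> z zG nz; case/orP: (Hab z zG nz) => /eqP ez; subst z => //.
    by move: nab; rewrite ny' nz.
by have := leq_trans ub lb; rewrite (mec e eE) ltnn.
Qed.

End Comp.

Theorem mainTheorem5 (gT : finGroupType) (G : {group gT}) :
  cyclic G -> 1 < #|G| ->
  (min_edge_connected G (os_edges G) <-> prime #|G|).
Proof.
move=> cG n1; split.
  move=> mec; apply/negPn/negP => np.
  exact: (composite_not_mec cG n1 np mec).
move=> pr e eE.
have h1 := prime_lb_E pr; have h2 := prime_ub_E pr.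
have h3 := prime_lb_Ee pr eE; have h4 := prime_ub_Ee pr eE.
have -> : edge_conn G (os_edges G) = #|G|.-1 by apply/eqP; rewrite eqn_leq h1 h2.
have -> : edge_conn G (os_edges G :\ e) = #|G|.-2 by apply/eqP; rewrite eqn_leq h3 h4.
by case: #|G| n1 => [|[|m]].
Qed.
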